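(* Let $\mathcal{A}\in\mathbb{R}^{d_1\times\cdots\times d_k}$ be an order-$k$ real tensor and let $1\le p\le q\le\infty$. Then \[ \|\mathcal{A}\|_p\le \|\mathcal{A}\|_q\le \dim(\mathcal{A})^{\frac1p-\frac1q}\,\|\mathcal{A}\|_p . \]
   Context: For $\mathcal{A}=(a_{i_1\dots i_k})\in\mathbb{R}^{d_1\times\cdots\times d_k}$, $\dim(\mathcal{A})=\prod_{n=1}^k d_n$. The associated multilinear functional is $\mathcal{A}(\mathbf{x}_1,\dots,\mathbf{x}_k)=\sum_{i_1,\dots,i_k} a_{i_1\dots i_k}x^{(1)}_{i_1}\cdots x^{(k)}_{i_k}$ for $\mathbf{x}_n\in\mathbb{R}^{d_n}$. For $1\le p\le\infty$ the $l^p$-norm of $\mathcal{A}$ is defined as $\|\mathcal{A}\|_p=\sup\{\mathcal{A}(\mathbf{x}_1,\dots,\mathbf{x}_k):\ \mathbf{x}_n\in\mathbb{R}^{d_n},\ \|\mathbf{x}_n\|_p=1,\ n\in[k]\}$, where $\|\mathbf{x}_n\|_p$ is the vector $l^p$-norm. (This is used even for matrices, which are viewed as bilinear functionals; it is not the classical induced matrix $l^p$-norm when $p\neq 2$.) *)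

(* Defs.v *)
From HB Require Import structures.
From mathcomp Require Import all_boot all_order all_algebra.
From mathcomp Require Import all_classical all_reals all_analysis.
Set Implicit Arguments. Unset Strict Implicit. Unset Printing Implicit Defensive.
Import Order.TTheory GRing.Theory Num.Theory.
Local Open Scope ring_scope.

Definition tindex (k : nat) (d : 'I_k -> nat) : finType :=
  {dffun forall n : 'I_k, 'I_(d n)}.

Definition tensor (R : realType) (k : nat) (d : 'I_k -> nat) :=
  tindex d -> R.

Definition tdim (k : nat) (d : 'I_k -> nat) : nat := (\prod_(n < k) d n)%N.

Definition tform (R : realType) (k : nat) (d : 'I_k -> nat)
  (A : tensor R d) (x : forall n : 'I_k, 'I_(d n) -> R) : R :=
  \sum_(i : tindex d) A i * \prod_(n < k) x n (i n).

Definition lpnorm (R : realType) (p : \bar R) (m : nat) (x : 'I_m -> R) : R :=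
  match p with
  | r%:E => (\sum_(i < m) `|x i| `^ r) `^ r^-1
  | _ => \big[Num.max/0]_(i < m) `|x i|
  end.

Definition einv (R : realType) (p : \bar R) : R :=
  match p with
  | r%:E => r^-1
  | _ => 0
  end.

Definition tnorm (R : realType) (p : \bar R) (k : nat) (d : 'I_k -> nat)
  (A : tensor R d) : R :=
  sup [set tform A x | x in
        [set x : forall n : 'I_k, 'I_(d n) -> R | forall n, lpnorm p (x n) = 1]].

(* Main.v *)
Require Import Defs.
From HB Require Import structures.
From mathcomp Require Import all_boot all_order all_algebra.
From mathcomp Require Import all_classical all_reals all_analysis.
From mathcomp Require Import ring lra.
Import Order.TTheory GRing.Theory Num.Theory.
Local Open Scope ring_scope.

Section Vec.
Variable R : realType.
Implicit Types (r s : R).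

Lemma sum_ge_term m (F : 'I_m -> R) j : (forall i, 0 <= F i) -> F j <= \sum_i F i.
Proof.
move=> F0; rewrite (bigD1 j) //= lerDl; exact: sumr_ge0.
Qed.

Lemma powRK r a : r != 0 -> 0 <= a -> (a `^ r) `^ r^-1 = a.
Proof. by move=> r0 a0; rewrite -powRrM mulfV // powRr1. Qed.

Lemma powRVK r a : r != 0 -> 0 <= a -> (a `^ r^-1) `^ r = a.
Proof. by move=> r0 a0; rewrite -powRrM mulVf // powRr1. Qed.

Lemma lp_ge0 (p : \bar R) m (x : 'I_m -> R) : 0 <= lpnorm p x.
Proof.
case: p => [r| |] /=; first exact: powR_ge0.
- exact: bigmax_ge_id.
- exact: bigmax_ge_id.
Qed.

Lemma lp_ge_entry (p : \bar R) m (x : 'I_m -> R) j : (0 < p)%E -> `|x j| <= lpnorm p x.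
Proof.
case: p => [r| |] //=.
- rewrite lte_fin => r0.
  rewrite -{1}(@powRK r `|x j|) ?gt_eqF //.
  have H := @sum_ge_term _ (fun i => `|x i| `^ r) j (fun i => powR_ge0 _ _).
  apply: (ge0_ler_powR _ _ _ H).
  - by rewrite invr_ge0 ltW.
  - by rewrite nnegrE powR_ge0.
  - by rewrite nnegrE sumr_ge0 // => i _; apply: powR_ge0.
- by move=> _; apply: le_bigmax.
Qed.


Lemma lp_ext (p : \bar R) m (x y : 'I_m -> R) :
  (forall i, `|x i| = `|y i|) -> lpnorm p x = lpnorm p y.
Proof.
move=> e; case: p => [r| |] /=.
- by congr (_ `^ _); apply: eq_bigr => i _; rewrite e.
- by apply: eq_bigr => i _; rewrite e.
- by apply: eq_bigr => i _; rewrite e.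
Qed.

Lemma lp_scale_ge0 (p : \bar R) m (x : 'I_m -> R) a : (0 < p)%E -> 0 <= a ->
  lpnorm p (fun i => a * x i) = a * lpnorm p x.
Proof.
case: p => [r| |] //=.
- rewrite lte_fin => r0 a0.
  rewrite (eq_bigr (fun i => a `^ r * `|x i| `^ r)); last first.
    by move=> i _; rewrite normrM (ger0_norm a0) powRM.
  by rewrite -mulr_sumr powRM ?powR_ge0 ?sumr_ge0 // ?powRK ?gt_eqF //
     => i _; apply: powR_ge0.
- move=> _ a0; have [->|a_gt0] := eqVneq a 0.
    rewrite mul0r; apply: bigmax_eq_id => i _; by rewrite mul0r normr0.
  have ap : 0 < a by rewrite lt_neqAle eq_sym a_gt0.
  apply/le_anti/andP; split.
    apply: bigmax_le; first by rewrite mulr_ge0 // bigmax_ge_id.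
    move=> i _; rewrite normrM (ger0_norm a0) ler_wpM2l //.
    exact: (le_bigmax _ (fun i => `|x i|)).
  rewrite -ler_pdivlMl //; apply: bigmax_le.
    by rewrite mulr_ge0 ?invr_ge0 // bigmax_ge_id.
  move=> i _; rewrite ler_pdivlMl //.
  have := le_bigmax 0 (fun i => `|a * x i|) i.
  by rewrite /= {1}normrM (ger0_norm a0).
Qed.

Lemma lp_scale (p : \bar R) m (x : 'I_m -> R) c : (0 < p)%E ->
  lpnorm p (fun i => c * x i) = `|c| * lpnorm p x.
Proof.
move=> p0; rewrite -lp_scale_ge0 //; apply: lp_ext => i.
by rewrite !normrM normr_id.
Qed.


Lemma lp_normalize (p q : \bar R) m C : (0 < p)%E -> (0 < q)%E ->
  (forall w : 'I_m -> R, lpnorm q w = 1 -> lpnorm p w <= C) ->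
  forall x : 'I_m -> R, lpnorm p x <= C * lpnorm q x.
Proof.
move=> p0 q0 H x.
have [N0|Npos] := eqVneq (lpnorm q x) 0.
  have x0 i : x i = 0.
    by apply/normr0_eq0/le_anti; rewrite normr_ge0 andbT -N0 lp_ge_entry.
  rewrite N0 mulr0 (@lp_ext p m x (fun i => 0 * x i)) ?lp_scale ?normr0 ?mul0r //.
  by move=> i; rewrite x0 mul0r.
have Np : 0 < lpnorm q x by rewrite lt_neqAle eq_sym Npos lp_ge0.
set N := lpnorm q x in Npos Np *.
have -> : lpnorm p x = N * lpnorm p (fun i => N^-1 * x i).
  rewrite -{1}[N]ger0_norm ?ltW // -lp_scale //.
  by apply: lp_ext => i; rewrite mulrA mulfV ?mul1r.
rewrite mulrC; apply: ler_wpM2r; first exact: ltW.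
apply: H.
by rewrite lp_scale // ger0_norm ?invr_ge0 ?ltW // mulVf.
Qed.

Lemma lp_unit_le (s r : R) m (w : 'I_m -> R) : 1 <= s -> s <= r ->
  lpnorm s%:E w = 1 -> lpnorm r%:E w <= 1.
Proof.
move=> s1 sr /= Hw.
have s0 : 0 < s by rewrite (lt_le_trans ltr01).
have r0 : 0 < r by rewrite (lt_le_trans s0).
have wle1 i : `|w i| <= 1.
  by rewrite -Hw (@lp_ge_entry s%:E) // lte_fin.
have S1 : \sum_i `|w i| `^ s = 1.
  by rewrite -(@powRVK s (\sum_i `|w i| `^ s)) ?gt_eqF ?Hw ?powR1 // sumr_ge0 // => i _; apply: powR_ge0.
have Sle : \sum_i `|w i| `^ r <= 1.
  rewrite -S1; apply: ler_sum => i _.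
  have [->|wi0] := eqVneq `|w i| 0.
    by rewrite !powR0 ?gt_eqF.
  apply: ger_powR => //.
  by rewrite wle1 andbT lt_neqAle eq_sym wi0 normr_ge0.
have -> : (1:R) = 1 `^ r^-1 by rewrite powR1.
apply: ge0_ler_powR => //.
- by rewrite invr_ge0 ltW.
- by rewrite nnegrE sumr_ge0 // => i _; apply: powR_ge0.
by rewrite nnegrE ler01.
Qed.


Lemma lp_mono (p q : \bar R) m (x : 'I_m -> R) : (1 <= p)%E -> (p <= q)%E ->
  lpnorm q x <= lpnorm p x.
Proof.
move=> p1 pq.
have p0 : (0 < p)%E by apply: lt_le_trans p1; rewrite lte_fin ltr01.
case: q pq => [r| |] pq.
- case: p p1 pq p0 => [s| |] //= p1 pq p0.
  rewrite -[X in _ <= X]mul1r; apply: (@lp_normalize r%:E s%:E m 1) => // [|w]; first by apply: lt_le_trans pq.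
  rewrite -!lee_fin in p1 pq *.
  by apply: lp_unit_le; rewrite -lee_fin.
- by apply: bigmax_le; [exact: lp_ge0| move=> i _; exact: lp_ge_entry].
- by case: p p1 pq p0.
Qed.

Lemma lp_unit_ge (s r : R) m (w : 'I_m -> R) : (0 < m)%N -> 1 <= s -> s < r ->
  lpnorm r%:E w = 1 -> lpnorm s%:E w <= m%:R `^ (s^-1 - r^-1).
Proof.
move=> m0 s1 sr /= Hw.
have s0 : 0 < s by rewrite (lt_le_trans ltr01).
have r0 : 0 < r by rewrite (lt_trans s0).
have rs0 : 0 < r - s by rewrite subr_gt0.
have mp : 0 < (m%:R : R) by rewrite ltr0n.
have S1 : \sum_i `|w i| `^ r = 1.
  by rewrite -(@powRVK r (\sum_i `|w i| `^ r)) ?gt_eqF ?Hw ?powR1 // sumr_ge0 // => i _; apply: powR_ge0.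
pose P := r / s; pose Q := r / (r - s).
have P0 : 0 < P by rewrite divr_gt0.
have Q0 : 0 < Q by rewrite divr_gt0.
have PQ : P^-1 + Q^-1 = 1.
  by rewrite /P /Q !invf_div -mulrDl addrC subrK mulfV ?gt_eqF.
pose b := (m%:R : R) `^ (- Q^-1).
have b0 : 0 < b by rewrite powR_gt0.
have bQ : b `^ Q = (m%:R)^-1.
  by rewrite -powRrM mulNr mulVf ?gt_eqF // powR_inv1 // ltW.
have Y i : `|w i| `^ s * b <= `|w i| `^ r / P + (m%:R)^-1 / Q.
  have := @conjugate_powR R (`|w i| `^ s) b P Q (powR_ge0 _ _) (ltW b0) P0 Q0 PQ.
  by rewrite bQ -powRrM /P mulrCA mulfV ?gt_eqF ?mulr1.
have T1 : (\sum_i `|w i| `^ s) * b <= 1.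
  rewrite mulr_suml; apply: (le_trans (ler_sum _ (fun i _ => Y i))).
  rewrite big_split /= -mulr_suml S1 sumr_const card_ord.
  have -> : (m%:R^-1 / Q) *+ m = Q^-1 :> R.
    by rewrite -mulrnAl -[_ *+ m]mulr_natr mulVf ?gt_eqF // mul1r.
  by rewrite div1r PQ.
have T2 : \sum_i `|w i| `^ s <= m%:R `^ (Q^-1).
  have -> : (m%:R : R) `^ (Q^-1) = b^-1 by rewrite /b powRN invrK.
  by rewrite -div1r ler_pdivlMr.
apply: (le_trans (y := (m%:R `^ (Q^-1)) `^ s^-1)).
  apply: ge0_ler_powR => //.
  - by rewrite invr_ge0 ltW.
  - by rewrite nnegrE sumr_ge0 // => i _; apply: powR_ge0.
  - by rewrite nnegrE powR_ge0.
rewrite -powRrM /Q invf_div (_ : (r - s) / r * s^-1 = s^-1 - r^-1) //.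
by field; rewrite ?gt_eqF.
Qed.


Lemma lp_comp (p q : \bar R) m (x : 'I_m -> R) : (0 < m)%N -> (1 <= p)%E -> (p <= q)%E ->
  lpnorm p x <= m%:R `^ (einv p - einv q) * lpnorm q x.
Proof.
move=> m0 p1 pq.
have mp : 0 < (m%:R : R) by rewrite ltr0n.
case: q pq => [r| |] pq.
- case: p p1 pq => [s| |] // p1 pq.
  rewrite !lee_fin in p1 pq.
  have [<-|srne] := eqVneq s r; first by rewrite /= subrr powRr0 mul1r.
  have sr : s < r by rewrite lt_neqAle srne.
  apply: (@lp_normalize s%:E r%:E) => //; rewrite ?lte_fin.
  + by apply: lt_le_trans p1.
  + by apply: lt_le_trans pq; apply: lt_le_trans p1.
  + by move=> w; apply: lp_unit_ge.
- case: p p1 pq => [s| |] // p1 _.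
  + rewrite lee_fin in p1.
    have s0 : 0 < s by apply: lt_le_trans p1.
    set M := lpnorm +oo x.
    have M0 : 0 <= M := lp_ge0 _ _ _.
    have H : \sum_i `|x i| `^ s <= m%:R * M `^ s.
      rewrite (_ : (m%:R : R) * M `^ s = \sum_(i < m) M `^ s); last by rewrite sumr_const card_ord mulr_natl.
      apply: ler_sum => i _.
      apply: ge0_ler_powR; rewrite ?nnegrE ?normr_ge0 ?(ltW s0) //.
      exact: (le_bigmax 0 (fun i => `|x i|) i).
    rewrite /= subr0 -(@powRK s M) ?gt_eqF // -powRM ?powR_ge0 //.
    apply: ge0_ler_powR => //.
    * by rewrite invr_ge0 ltW.
    * by rewrite nnegrE sumr_ge0 // => i _; apply: powR_ge0.
    * by rewrite nnegrE mulr_ge0 ?powR_ge0.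
  + by rewrite /= subrr powRr0 mul1r.
- by case: p p1 pq.
Qed.
Lemma lp_pos (p q : \bar R) m (v : 'I_m -> R) : (0 < p)%E -> (0 < q)%E ->
  lpnorm p v = 1 -> 0 < lpnorm q v.
Proof.
move=> p0 q0 H; rewrite lt_neqAle lp_ge0 andbT eq_sym; apply/negP => /eqP N0.
have v0 j : v j = 0.
  by apply/normr0_eq0/le_anti; rewrite normr_ge0 andbT -N0 lp_ge_entry.
move: H; rewrite (@lp_ext p m v (fun i => 0 * v i)) ?lp_scale ?normr0 ?mul0r //.
  by move=> /esym /eqP; rewrite oner_eq0.
by move=> i; rewrite v0 mul0r.
Qed.

Lemma exists_unit (p : \bar R) m : (0 < m)%N -> (0 < p)%E ->
  lpnorm p (fun _ : 'I_m => (lpnorm p (fun _ : 'I_m => (1 : R)))^-1) = 1.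
Proof.
move=> m0 p0.
have N0 : 0 < lpnorm p (fun _ : 'I_m => (1 : R)).
  apply: (lt_le_trans ltr01).
  by have := @lp_ge_entry p m (fun _ => 1) (Ordinal m0) p0; rewrite normr1.
rewrite (@lp_ext p m _ (fun i => (lpnorm p (fun _ : 'I_m => (1 : R)))^-1 * 1)).
  by rewrite lp_scale // ger0_norm ?invr_ge0 ?ltW // mulVf ?gt_eqF.
by move=> i; rewrite mulr1.
Qed.

Lemma prod_powR (I : Type) (s : seq I) (f : I -> R) e :
  (forall i, 0 <= f i) -> \prod_(i <- s) f i `^ e = (\prod_(i <- s) f i) `^ e.
Proof.
move=> f0; elim: s => [|a s IH]; first by rewrite !big_nil powR1.
rewrite !big_cons IH powRM // prodr_ge0 // => i _.
Qed.

End Vec.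

Section Tensor.
Variables (R : realType) (k : nat) (d : 'I_k -> nat).
Hypothesis hd : forall n, (0 < d n)%N.
Variable A : tensor R d.

Definition U (p : \bar R) : set (forall n : 'I_k, 'I_(d n) -> R) :=
  fun x => forall n, lpnorm p (x n) = 1.

Lemma tform_scale (c : 'I_k -> R) (x : forall n : 'I_k, 'I_(d n) -> R) :
  tform A (fun n j => c n * x n j) = (\prod_n c n) * tform A x.
Proof.
rewrite /tform mulr_sumr; apply: eq_bigr => i _.
by rewrite big_split /= mulrCA.
Qed.

Definition xunit (p : \bar R) : forall n : 'I_k, 'I_(d n) -> R :=
  fun n _ => (lpnorm p (fun _ : 'I_(d n) => (1 : R)))^-1.

Lemma xunitP p : (0 < p)%E -> U p (xunit p).
Proof. by move=> p0 n; apply: exists_unit. Qed.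

Lemma tform_bound {p x} : (0 < p)%E -> U p x -> tform A x <= \sum_i `|A i|.
Proof.
move=> p0 Ux; apply: (le_trans (ler_norm _)); apply: (le_trans (ler_norm_sum _ _ _)).
apply: ler_sum => i _; rewrite normrM normr_prod.
rewrite -[X in _ <= X]mulr1; apply: ler_wpM2l => //.
apply: prodr_ile1 => n _; rewrite normr_ge0 /= -(Ux n).
exact: lp_ge_entry.
Qed.

Lemma tnorm_ge {p x} : (0 < p)%E -> U p x -> tform A x <= tnorm p A.
Proof.
move=> p0 Ux; apply: ub_le_sup; last by exists x.
exists (\sum_i `|A i|) => _ [y Uy <-]; exact: tform_bound Uy.
Qed.

Lemma tnorm_ge0 p : (0 < k)%N -> (0 < p)%E -> 0 <= tnorm p A.
Proof.
move=> k0 p0; set n0 := Ordinal k0.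
pose c n : R := if n == n0 then -1 else 1.
have Ux := xunitP p p0.
have Ux' : U p (fun n j => c n * xunit p n j).
  by move=> n; rewrite lp_scale // Ux /c; case: ifP; rewrite ?normrN normr1 mulr1.
have pc : \prod_n c n = -1.
  rewrite (bigD1 n0) //= big1 ?mulr1 /c ?eqxx // => n /negbTE ->.
  by [].
have h1 := tnorm_ge p0 Ux; have h2 := tnorm_ge p0 Ux'.
rewrite tform_scale pc mulN1r in h2.
have [t0|t0] := leP 0 (tform A (xunit p)).
  exact: le_trans h1.
by apply: le_trans h2; rewrite oppr_ge0 ltW.
Qed.

Lemma transfer (p q : \bar R) (K : 'I_k -> R) : (0 < p)%E -> (0 < q)%E ->
  (forall n, 0 <= K n) ->
  (forall n (v : 'I_(d n) -> R), lpnorm p v = 1 -> lpnorm q v <= K n) ->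
  tnorm p A <= (\prod_n K n) * tnorm q A.
Proof.
move=> p0 q0 K0 HK; apply: ge_sup.
  by exists (tform A (xunit p)); exists (xunit p) => //; exact: xunitP.
move=> _ [x Ux <-].
pose c n := lpnorm q (x n).
have c0 n : 0 < c n by apply: lp_pos (Ux n).
pose y n j := (c n)^-1 * x n j.
have Uy : U q y.
  by move=> n; rewrite /y lp_scale // ger0_norm ?invr_ge0 ?ltW // mulVf ?gt_eqF.
have -> : x = (fun n j => c n * y n j).
  apply: functional_extensionality_dep => n; apply: funext => j.
  by rewrite /y mulrA mulfV ?gt_eqF ?mul1r.
rewrite tform_scale.
have cK : \prod_n c n <= \prod_n K n.
  by apply: ler_prod => n _; rewrite ltW //= HK.
have [k0|kpos] := posnP k.
  have e (f : 'I_k -> R) : \prod_n f n = 1.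
    apply: big1 => n _; have := ltn_ord n; move: (nat_of_ord n) => m.
    by rewrite k0.
  rewrite !e !mul1r; exact: tnorm_ge.
apply: (le_trans (y := \prod_n c n * tnorm q A)).
  apply: ler_wpM2l; first by apply: prodr_ge0 => n _; apply: ltW.
  exact: tnorm_ge.
by apply: ler_wpM2r => //; apply: tnorm_ge0.
Qed.

End Tensor.

Theorem proposition2p4 (R : realType) (k : nat) (d : 'I_k -> nat)
  (hd : forall n, (0 < d n)%N) (A : tensor R d) (p q : \bar R)
  (h1p : (1 <= p)%E) (hpq : (p <= q)%E) :
  tnorm p A <= tnorm q A /\
  tnorm q A <= (tdim d)%:R `^ (einv p - einv q) * tnorm p A.
Proof.
have p0 : (0 < p)%E by apply: lt_le_trans h1p; rewrite lte_fin ltr01.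
have q0 : (0 < q)%E by apply: lt_le_trans hpq.
have h1q : (1 <= q)%E by apply: le_trans hpq.
split.
  have := @transfer R k d hd A p q (fun _ => 1) p0 q0 (fun _ => ler01).
  rewrite big1 // mul1r; apply => n v Hv; rewrite -Hv; exact: lp_mono.
rewrite /tdim natr_prod -prod_powR; last by move=> n; apply: ler0n.
apply: transfer => //.
move=> n v Hv; have := @lp_comp R p q (d n) v (hd n) h1p hpq; by rewrite Hv mulr1.
Qed.
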